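(* Under Assumptions 1 and 2 (stated in the context), the boundary $\partial\mathcal{K}_\beta:=\operatorname{cl}(\mathcal{K}_\beta)\setminus\mathcal{K}_\beta$ satisfies $\partial\mathcal{K}_\beta\subseteq\{K\in\mathcal{K}:\|\mathbf{T}_\infty(K)\|_{\mathcal{H}_\infty}=\beta\}$.
   Context: Let $A\in\mathbb{R}^{n\times n}$, $B\in\mathbb{R}^{n\times m}$, $B_w\in\mathbb{R}^{n\times n}$, $W:=B_wB_w^{\mathsf T}$. Let $Q_2\succeq0$, $R_2\succ0$, $Q_\infty\succ0$, $R_\infty\succ0$ be symmetric weight matrices and $\beta>0$. For $K\in\mathbb{R}^{m\times n}$ write $A_K:=A+BK$. Let $\mathcal{K}:=\{K: A_K \text{ Hurwitz}\}$. For $K\in\mathcal{K}$ let $\mathbf{T}_\infty(K)(s)=\begin{bmatrix}Q_\infty^{1/2}\\ R_\infty^{1/2}K\end{bmatrix}(sI-A_K)^{-1}B_w$ and $\|\cdot\|_{\mathcal{H}_\infty}$ the $\mathcal{H}_\infty$ norm. $\mathcal{K}_\beta:=\{K\in\mathcal{K}:\|\mathbf{T}_\infty(K)\|_{\mathcal{H}_\infty}<\beta\}$. Assumption 1: $(A,B)$ stabilizable, $(Q_2^{1/2},A)$ detectable, and $\beta>\beta^\ast:=\inf_{K\in\mathcal{K}}\|\mathbf{T}_\infty(K)\|_{\mathcal{H}_\infty}$. Assumption 2: $Q_2\succeq0$ and $W,Q_\infty,R_2,R_\infty$ positive definite. *)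

(* Defs.v *)
From HB Require Import structures.
From mathcomp Require Import all_boot all_order all_algebra.
From mathcomp Require Import complex.
From mathcomp Require Import all_classical all_reals all_analysis.
Set Implicit Arguments. Unset Strict Implicit. Unset Printing Implicit Defensive.
Import Order.TTheory GRing.Theory Num.Theory numFieldTopology.Exports.
Local Open Scope ring_scope.
Local Open Scope classical_set_scope.

Section Defs.
Variable R : realType.
Local Notation C := (complex R).

Definition cmx (p q : nat) (M : 'M[R]_(p, q)) : 'M[C]_(p, q) :=
  map_mx (fun x => (x%:C)%C) M.

Definition hurwitz (n : nat) (M : 'M[R]_n) : Prop :=
  forall l : C, eigenvalue (cmx M) l -> complex.Re l < 0.

Definition psd (n : nat) (M : 'M[R]_n) : Prop :=
  M^T = M /\ forall x : 'cV[R]_n, 0 <= (x^T *m M *m x) 0 0.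
Definition pd (n : nat) (M : 'M[R]_n) : Prop :=
  M^T = M /\ forall x : 'cV[R]_n, x != 0 -> 0 < (x^T *m M *m x) 0 0.

Definition is_sqrtm (n : nat) (S M : 'M[R]_n) : Prop :=
  psd S /\ S *m S = M.

Definition stabilizable (n m : nat) (A : 'M[R]_n) (B : 'M[R]_(n, m)) : Prop :=
  exists K : 'M[R]_(m, n), hurwitz (A + B *m K).
Definition detectable (n p : nat) (Cm : 'M[R]_(p, n)) (A : 'M[R]_n) : Prop :=
  exists L : 'M[R]_(n, p), hurwitz (A + L *m Cm).

Definition vnorm (q : nat) (v : 'cV[C]_q) : R :=
  Num.sqrt (\sum_(i < q) (complex.Re (v i 0) ^+ 2 + complex.Im (v i 0) ^+ 2)).

Definition opnorm (p q : nat) (M : 'M[C]_(p, q)) : \bar R :=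
  ereal_sup [set (vnorm (M *m v))%:E | v in [set v : 'cV[C]_q | vnorm v = 1]].

Definition Tinf (n m : nat) (A : 'M[R]_n) (B : 'M[R]_(n, m)) (Bw : 'M[R]_n)
  (Qh : 'M[R]_n) (Rh : 'M[R]_m) (K : 'M[R]_(m, n)) (w : R) : 'M[C]_(n + m, n) :=
  cmx (col_mx Qh (Rh *m K)) *m
  invmx ((Complex 0 w)%:M - cmx (A + B *m K)) *m cmx Bw.

Definition hinf_norm (n m : nat) (A : 'M[R]_n) (B : 'M[R]_(n, m)) (Bw : 'M[R]_n)
  (Qh : 'M[R]_n) (Rh : 'M[R]_m) (K : 'M[R]_(m, n)) : \bar R :=
  ereal_sup [set opnorm (Tinf A B Bw Qh Rh K w) | w in [set: R]].

Definition Kstab (n m : nat) (A : 'M[R]_n) (B : 'M[R]_(n, m)) : set 'M[R]_(m, n) :=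
  [set K | hurwitz (A + B *m K)].

Definition Kbeta (n m : nat) (A : 'M[R]_n) (B : 'M[R]_(n, m)) (Bw : 'M[R]_n)
  (Qh : 'M[R]_n) (Rh : 'M[R]_m) (beta : R) : set 'M[R]_(m, n) :=
  [set K | Kstab A B K /\ (hinf_norm A B Bw Qh Rh K < beta%:E)%E].

Definition beta_star (n m : nat) (A : 'M[R]_n) (B : 'M[R]_(n, m)) (Bw : 'M[R]_n)
  (Qh : 'M[R]_n) (Rh : 'M[R]_m) : \bar R :=
  ereal_inf [set hinf_norm A B Bw Qh Rh K | K in Kstab A B].

End Defs.

(* Main.v *)
Require Import Defs.
From HB Require Import structures.
From mathcomp Require Import all_boot all_order all_algebra.
From mathcomp Require Import complex.
From mathcomp Require Import all_classical all_reals all_analysis.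
Import Order.TTheory GRing.Theory Num.Theory numFieldTopology.Exports.
Local Open Scope ring_scope.
Local Open Scope classical_set_scope.

Module Tk1.
Section Gen.
Variable K : numFieldType.
Variables (T : Type) (F : set_system T).
Hypothesis FF : Filter F.
Lemma cvgK_add (f g : T -> K) (a b : K) : f x @[x --> F] --> a -> g x @[x --> F] --> b ->
  (f x + g x) @[x --> F] --> a + b.
Proof. move=> fa gb; exact: (@cvgD _ K^o _ _ _ _ _ _ _ fa gb). Qed.
Lemma cvgK_cst (a : K) : (fun _ : T => a) @ F --> a.
Proof. exact: (@cvg_cst K^o). Qed.
Lemma cvgK_opp (f : T -> K) (a : K) : f x @[x --> F] --> a -> (- f x) @[x --> F] --> - a.
Proof. move=> fa; exact: (@cvgN _ K^o _ _ _ _ _ fa). Qed.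
Lemma cvgK_mul (f g : T -> K) (a b : K) : f x @[x --> F] --> a -> g x @[x --> F] --> b ->
  (f x * g x) @[x --> F] --> a * b.
Proof. move=> fa gb; exact: (cvgM fa gb). Qed.
Lemma cvgK_inv (f : T -> K) (a : K) : a != 0 -> f x @[x --> F] --> a ->
  ((f x)^-1) @[x --> F] --> a^-1.
Proof. move=> a0 fa; exact: (cvgV a0 fa). Qed.
Lemma cvg_bigsum (J : Type) (r : seq J) (P : pred J) (f : J -> T -> K) (a : J -> K) :
  (forall j, f j x @[x --> F] --> a j) ->
  (\sum_(j <- r | P j) f j x) @[x --> F] --> \sum_(j <- r | P j) a j.
Proof.
move=> H; elim: r => [|j r IH].
  under eq_fun do rewrite big_nil. rewrite big_nil; exact: cvgK_cst.
under eq_fun do rewrite big_cons. rewrite big_cons.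
case Pj: (P j); last exact: IH. apply: cvgK_add; [exact: H | exact: IH].
Qed.
Lemma cvg_bigprod (J : Type) (r : seq J) (P : pred J) (f : J -> T -> K) (a : J -> K) :
  (forall j, f j x @[x --> F] --> a j) ->
  (\prod_(j <- r | P j) f j x) @[x --> F] --> \prod_(j <- r | P j) a j.
Proof.
move=> H; elim: r => [|j r IH].
  under eq_fun do rewrite big_nil. rewrite big_nil; exact: cvgK_cst.
under eq_fun do rewrite big_cons. rewrite big_cons.
case Pj: (P j); last exact: IH. apply: cvgK_mul; [exact: H | exact: IH].
Qed.
Definition mxlim p q (f : T -> 'M[K]_(p, q)) (a : 'M[K]_(p, q)) :=
  forall i j, (f x i j) @[x --> F] --> a i j.
Arguments mxlim {p q} f a.
Lemma mxlim_cst p q (a : 'M[K]_(p, q)) : mxlim (fun _ => a) a.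
Proof. move=> i j; exact: cvgK_cst. Qed.
Lemma mxlim_add p q (f g : T -> 'M[K]_(p, q)) a b :
  mxlim f a -> mxlim g b -> mxlim (fun x => f x + g x) (a + b).
Proof.
move=> fa gb i j; rewrite mxE; under eq_fun do rewrite mxE.
exact: cvgK_add.
Qed.
Lemma mxlim_opp p q (f : T -> 'M[K]_(p, q)) a :
  mxlim f a -> mxlim (fun x => - f x) (- a).
Proof.
move=> fa i j; rewrite mxE; under eq_fun do rewrite mxE.
exact: cvgK_opp.
Qed.
Lemma mxlim_sub p q (f g : T -> 'M[K]_(p, q)) a b :
  mxlim f a -> mxlim g b -> mxlim (fun x => f x - g x) (a - b).
Proof. move=> fa gb; apply: mxlim_add => //; exact: mxlim_opp. Qed.
Lemma mxlim_mul p q r (f : T -> 'M[K]_(p, q)) (g : T -> 'M[K]_(q, r)) a b :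
  mxlim f a -> mxlim g b -> mxlim (fun x => f x *m g x) (a *m b).
Proof.
move=> fa gb i j; rewrite mxE; under eq_fun do rewrite mxE.
apply: cvg_bigsum => k; exact: cvgK_mul.
Qed.
Lemma mxlim_scale p q (c : T -> K) (f : T -> 'M[K]_(p, q)) (c0 : K) a :
  c x @[x --> F] --> c0 -> mxlim f a -> mxlim (fun x => c x *: f x) (c0 *: a).
Proof.
move=> cc fa i j; rewrite mxE; under eq_fun do rewrite mxE.
exact: cvgK_mul.
Qed.
Lemma mxlim_det p (f : T -> 'M[K]_p) a :
  mxlim f a -> (\det (f x)) @[x --> F] --> \det a.
Proof.
move=> fa; rewrite /determinant.
apply: cvg_bigsum => s; apply: cvgK_mul; first exact: cvgK_cst.
apply: cvg_bigprod => i; exact: fa.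
Qed.
Lemma mxlim_rowcol' p (f : T -> 'M[K]_p.+1) a i0 j0 :
  mxlim f a -> mxlim (fun x => row' i0 (col' j0 (f x))) (row' i0 (col' j0 a)).
Proof.
move=> fa i j; rewrite !mxE; under eq_fun do rewrite !mxE. exact: fa.
Qed.
Lemma mxlim_adj p (f : T -> 'M[K]_p) a :
  mxlim f a -> mxlim (fun x => \adj (f x)) (\adj a).
Proof.
case: p f a => [|p] f a fa i j.
  by case: i.
rewrite mxE; under eq_fun do rewrite mxE.
rewrite /cofactor; apply: cvgK_mul; first exact: cvgK_cst.
apply: mxlim_det; exact: mxlim_rowcol'.
Qed.
Lemma mxlim_inv p (f : T -> 'M[K]_p) a : a \in unitmx ->
  mxlim f a -> mxlim (fun x => (\det (f x))^-1 *: \adj (f x)) (invmx a).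
Proof.
move=> ua fa; rewrite /invmx ua; apply: mxlim_scale.
  apply: cvgK_inv; first by rewrite -unitfE -unitmxE.
  exact: mxlim_det.
exact: mxlim_adj.
Qed.
End Gen.
Arguments mxlim {K T} F {p q} f a.
End Tk1.
Import Tk1.

Module Tk2.
Local Open Scope complex_scope.
Section RC.
Variable R : realType.
Local Notation C := (complex R).
Lemma normC_real (y : R) : `|y%:C| = `|y|%:C :> C.
Proof. by rewrite normc_def /= expr0n addr0 sqrtr_sqr. Qed.
Lemma subC_real (a b : R) : a%:C - b%:C = (a - b)%:C :> C.
Proof. by apply/eqP; rewrite eq_complex /= oppr0 addr0 !eqxx. Qed.
Lemma ReB (a b : C) : complex.Re (a - b) = complex.Re a - complex.Re b.
Proof. by case: a => ? ?; case: b => ? ?. Qed.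
Lemma ImB (a b : C) : complex.Im (a - b) = complex.Im a - complex.Im b.
Proof. by case: a => ? ?; case: b => ? ?. Qed.
Lemma normc_ge_Im (x : C) : `|complex.Im x|%:C <= `|x|.
Proof.
rewrite normc_def lecR -sqrtr_sqr ler_sqrt ?lerDr ?sqr_ge0 //.
by rewrite addr_ge0 ?sqr_ge0.
Qed.
Variables (T : Type) (F : set_system T).
Hypothesis FF : Filter F.
Lemma cvg_RC (g : T -> R) (r : R) : g x @[x --> F] --> r -> ((g x)%:C : C^o) @[x --> F] --> (r%:C : C^o).
Proof.
move=> gr; apply/(@cvgrPdist_lt _ C^o) => e e0.
have := e0; rewrite ltcE /= => /andP[/eqP Ime Ree].
near=> x. rewrite subC_real normC_real ltcE /= Ime eqxx /=.
near: x. exact: (@cvgr_dist_lt _ R^o).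
Unshelve. all: by end_near.
Qed.
Lemma cvg_Re (f : T -> C^o) (a : C^o) : f x @[x --> F] --> a -> (complex.Re (f x)) @[x --> F] --> complex.Re a.
Proof.
move=> fa; apply/(@cvgrPdist_lt _ R^o) => e e0.
have e0' : 0 < e%:C :> C by rewrite ltcR.
near=> x. rewrite -ReB -ltcR (le_lt_trans (normc_ge_Re _)) //.
near: x. exact: (@cvgr_dist_lt _ C^o).
Unshelve. all: by end_near.
Qed.
Lemma cvg_Im (f : T -> C^o) (a : C^o) : f x @[x --> F] --> a -> (complex.Im (f x)) @[x --> F] --> complex.Im a.
Proof.
move=> fa; apply/(@cvgrPdist_lt _ R^o) => e e0.
have e0' : 0 < e%:C :> C by rewrite ltcR.
near=> x. rewrite -ImB -ltcR (le_lt_trans (normc_ge_Im _)) //.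
near: x. exact: (@cvgr_dist_lt _ C^o).
Unshelve. all: by end_near.
Qed.
Lemma mxlim_cmx p q (g : T -> 'M[R]_(p, q)) b :
  mxlim F g b -> mxlim F (fun x => cmx (g x)) (cmx b).
Proof.
move=> gb i j; rewrite mxE; under eq_fun do rewrite mxE.
exact: cvg_RC.
Qed.
Lemma vnorm_cvg q (f : T -> 'cV[C]_q) a :
  mxlim F f a -> (vnorm (f x)) @[x --> F] --> vnorm a.
Proof.
move=> fa; rewrite /vnorm.
apply: (continuous_cvg _ (@sqrt_continuous R _)).
apply: cvg_bigsum => i; apply: cvgK_add; rewrite expr2; under eq_fun do rewrite expr2.
  by apply: cvgK_mul; apply: cvg_Re; apply: fa.
by apply: cvgK_mul; apply: cvg_Im; apply: fa.
Qed.
End RC.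
End Tk2.
Import Tk2.

Module Tk3.
Local Open Scope complex_scope.
Lemma eig_det (F : fieldType) n (A : 'M[F]_n) a :
  eigenvalue A a = (\det (a%:M - A) == 0).
Proof.
apply/eigenvalueP/det0P=> [[v Av_av v_nz] | [v v_nz Av_av]]; exists v => //.
  by rewrite mulmxBr Av_av mul_mx_scalar subrr.
by apply/eqP; rewrite -mul_mx_scalar eq_sym -subr_eq0 -mulmxBr Av_av.
Qed.
Lemma char_horner (F : fieldType) n (A : 'M[F]_n) a :
  (char_poly A).[a] = \det (a%:M - A).
Proof.
apply/esym; rewrite horner_sum; apply: eq_bigr => s _.
rewrite hornerM horner_exp !hornerE; congr (_ * _).
rewrite (big_morph _ (fun p q => hornerM p q a) (hornerC 1 a)).
by apply: eq_bigr => i _; rewrite !mxE !(hornerE, hornerMn).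
Qed.
Section Alg.
Variable R : realType.
Local Notation C := (complex R).
Lemma cmxE p q (M : 'M[R]_(p, q)) : cmx M = map_mx (real_complex R) M.
Proof. by []. Qed.
Lemma cmx_unit p (M : 'M[R]_p) : (cmx M \in unitmx) = (M \in unitmx).
Proof. by rewrite cmxE map_unitmx. Qed.
Lemma unit_of_inj (F : fieldType) p (M : 'M[F]_p) :
  (forall v : 'rV_p, v *m M = 0 -> v = 0) -> M \in unitmx.
Proof.
move=> H; rewrite unitmxE unitfE; apply/negP => /det0P [v nz vM].
by move: nz; rewrite (H v vM) eqxx.
Qed.
Lemma pd_sqrt_unit p (Q S : 'M[R]_p) : pd Q -> is_sqrtm S Q -> S \in unitmx.
Proof.
move=> [_ pdQ] [_ SS]; apply: unit_of_inj => v vS.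
apply/eqP; apply/negP => /negP nz.
have nzT : v^T != 0 by rewrite -(inj_eq (@trmx_inj _ _ _)) trmx0 trmxK.
have := pdQ _ nzT; rewrite trmxK -SS mulmxA vS !mul0mx mxE ltxx //.
Qed.
Lemma pd_BBt_unit p (Bw : 'M[R]_p) : pd (Bw *m Bw^T) -> Bw \in unitmx.
Proof.
move=> [_ pdQ]; apply: unit_of_inj => v vS.
apply/eqP; apply/negP => /negP nz.
have nzT : v^T != 0 by rewrite -(inj_eq (@trmx_inj _ _ _)) trmx0 trmxK.
have := pdQ _ nzT; rewrite trmxK mulmxA vS !mul0mx mxE ltxx //.
Qed.
Lemma hurwitz_unit p (M : 'M[R]_p) (l : C) : hurwitz M -> 0 <= complex.Re l ->
  (l%:M - cmx M) \in unitmx.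
Proof.
move=> hM l0; rewrite unitmxE unitfE; apply/negP => d0.
have := hM l; rewrite eig_det d0 => /(_ isT); rewrite ltNge l0.
by [].
Qed.
Lemma hurwitz_det_lb p (M : 'M[R]_p) (l : C) : hurwitz M -> 0 < complex.Re l ->
  ((complex.Re l) ^+ p)%:C <= `|\det (l%:M - cmx M)|.
Proof.
move=> hM l0.
have [r Hr] := closed_field_poly_normal (char_poly (cmx M)).
have lc : lead_coef (char_poly (cmx M)) = 1 by apply/monicP; apply: char_poly_monic.
rewrite lc scale1r in Hr.
have sr : size r = p.
  by have := size_char_poly (cmx M); rewrite Hr size_prod_XsubC => -[].
rewrite -char_horner Hr horner_prod normr_prod.
have -> : ((complex.Re l) ^+ p)%:C = \prod_(z <- r) ((complex.Re l)%:C : C).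
  by rewrite big_const_seq count_predT sr iter_mulr_1 rmorphXn.
rewrite big_seq [X in _ <= X]big_seq.
apply: ler_prod => z zr; apply/andP; split; first by rewrite lecR ltW.
rewrite hornerXsubC.
apply: le_trans (normc_ge_Re _); rewrite lecR.
have zneg : complex.Re z < 0.
  apply: hM; rewrite eigenvalue_root_char Hr root_prod_XsubC //.
have -> : complex.Re (l - z) = complex.Re l - complex.Re z by case: (l) => ? ?; case: (z) => ? ?.
apply: le_trans (ler_norm _); rewrite lerDl oppr_ge0 ltW //.
Qed.
Lemma sq_ge0 (x y : R) : 0 <= x ^+ 2 + y ^+ 2.
Proof. by rewrite addr_ge0 ?sqr_ge0. Qed.
Lemma vnorm_ge0 q (v : 'cV[C]_q) : 0 <= vnorm v.
Proof. exact: sqrtr_ge0. Qed.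
Lemma vsum_ge0 q (v : 'cV[C]_q) :
  0 <= \sum_(i < q) (complex.Re (v i 0) ^+ 2 + complex.Im (v i 0) ^+ 2).
Proof. by apply: sumr_ge0 => i _; apply: sq_ge0. Qed.
Lemma vnorm0 q : vnorm (0 : 'cV[C]_q) = 0.
Proof.
rewrite /vnorm big1 ?sqrtr0 // => i _; rewrite mxE /= expr0n addr0 //.
Qed.
Lemma vnorm_gt0 q (v : 'cV[C]_q) : v != 0 -> 0 < vnorm v.
Proof.
move=> nz.
have [i Hi] : exists i, v i 0 != 0.
  apply/existsP; apply: contraR nz; rewrite negb_exists => /forallP H.
  apply/eqP/matrixP => i j; rewrite (ord1 j) mxE; exact/eqP/negPn/H.
rewrite /vnorm sqrtr_gt0 (bigD1 i) //=.
have H1 : 0 < complex.Re (v i 0) ^+ 2 + complex.Im (v i 0) ^+ 2.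
  by rewrite -ltcR add_Re2_Im2 raddf0 exprn_gt0 // normr_gt0.
apply: (lt_le_trans H1); rewrite lerDl.
by apply: sumr_ge0 => j _; apply: sq_ge0.
Qed.
Lemma vnormZ q (c : R) (v : 'cV[C]_q) : vnorm (c%:C *: v) = `|c| * vnorm v.
Proof.
rewrite /vnorm -sqrtr_sqr -sqrtrM ?sqr_ge0 // mulr_sumr; congr Num.sqrt.
apply: eq_bigr => i _; rewrite mxE.
case: (v i 0) => a b /=; rewrite !mul0r subr0 addr0 !exprMn mulrDr //.
Qed.
Lemma vnorm_col_ge p q (a : 'cV[C]_p) (b : 'cV[C]_q) : vnorm a <= vnorm (col_mx a b).
Proof.
rewrite /vnorm ler_sqrt ?vsum_ge0 // big_split_ord /=.
under [X in _ <= X + _]eq_bigr do rewrite col_mxEu.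
by rewrite lerDl; apply: sumr_ge0 => j _; apply: sq_ge0.
Qed.
End Alg.
End Tk3.
Import Tk3.

Module Tk4.
Local Open Scope complex_scope.
Set Implicit Arguments. Unset Strict Implicit. Unset Printing Implicit Defensive.
Section Main.
Variable R : realType.
Local Notation C := (complex R).
Variables (n m : nat) (A : 'M[R]_n) (B : 'M[R]_(n, m)) (Bw : 'M[R]_n)
  (Qh : 'M[R]_n) (Rh : 'M[R]_m) (beta : R).
Local Notation Kb := (Kbeta A B Bw Qh Rh beta).
Lemma id_mxlim (K : 'M[R]_(m, n)) : mxlim (nbhs K) (fun K' => K') K.
Proof. move=> i j; exact: (@coord_continuous R m n i j K). Qed.
Lemma mxlim_MKc K : mxlim (nbhs K) (fun K' => cmx (A + B *m K')) (cmx (A + B *m K)).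
Proof.
apply: mxlim_cmx; apply: mxlim_add; first exact: mxlim_cst.
apply: mxlim_mul; [exact: mxlim_cst | exact: id_mxlim].
Qed.
Lemma closure_near (S : set 'M[R]_(m, n)) K (P : 'M[R]_(m, n) -> Prop) :
  closure S K -> (\forall K' \near K, P K') -> exists K', S K' /\ P K'.
Proof. by move=> cl nP; have [K' [SK PK]] := cl _ nP; exists K'. Qed.
Lemma opnorm_ge p q (M : 'M[C]_(p, q)) v : vnorm v = 1 ->
  ((vnorm (M *m v))%:E <= opnorm M)%E.
Proof. by move=> v1; apply: ereal_sup_ubound; exists v. Qed.
Lemma hinf_ge K w : (opnorm (Tinf A B Bw Qh Rh K w) <= hinf_norm A B Bw Qh Rh K)%E.
Proof. by apply: ereal_sup_ubound; exists w. Qed.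
Lemma Kb_bound K w v : Kb K -> vnorm v = 1 ->
  vnorm (Tinf A B Bw Qh Rh K w *m v) < beta.
Proof.
move=> [_ hK] v1; rewrite -lte_fin.
apply: (le_lt_trans (opnorm_ge (Tinf A B Bw Qh Rh K w) v1)); exact: (le_lt_trans (hinf_ge K w) hK).
Qed.
Lemma partA1 K l : closure Kb K -> eigenvalue (cmx (A + B *m K)) l ->
  0 < complex.Re l -> False.
Proof.
move=> cl eK l0.
pose f K' := \det (l%:M - cmx (A + B *m K')).
have fc : (f x : C^o) @[x --> nbhs K] --> (f K : C^o).
  apply: mxlim_det; apply: mxlim_sub; [exact: mxlim_cst | exact: mxlim_MKc].
have fK : f K = 0 by apply/eqP; rewrite -eig_det.
have e0 : 0 < ((complex.Re l) ^+ n)%:C :> C by rewrite ltcR exprn_gt0.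
have [K' [[hK' _] HK']] := closure_near cl (@cvgr_dist_lt _ C^o _ _ _ _ _ fc _ e0).
have := @hurwitz_det_lb R n _ l hK' l0.
rewrite fK sub0r normrN in HK'.
move=> H; have := lt_le_trans HK' H; by rewrite /f ltxx.
Qed.
Lemma cmx_col_mul K (x : 'cV[C]_n) :
  cmx (col_mx Qh (Rh *m K)) *m x = col_mx (cmx Qh *m x) (cmx (Rh *m K) *m x).
Proof. by rewrite /cmx map_col_mx mul_col_mx. Qed.
Lemma partA2 K l : Qh \in unitmx -> Bw \in unitmx -> 0 < beta ->
  closure Kb K -> eigenvalue (cmx (A + B *m K)) l -> complex.Re l = 0 -> False.
Proof.
move=> uQ uB b0 cl eK l0.
set M := cmx (A + B *m K).
have [x x0 Nx] : exists2 x : 'cV[C]_n, x != 0 & (l%:M - M) *m x = 0.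
  have : \det (l%:M - M)^T == 0 by rewrite det_tr -eig_det.
  case/det0P => v v0 vN; exists v^T; first by rewrite trmx_eq0.
  by rewrite -(trmxK (l%:M - M)) -trmx_mul vN trmx0.
set w := complex.Im l.
have lw : l = Complex 0 w by rewrite /w; case: (l) l0 => a b /= ->.
set q := vnorm (cmx Qh *m x).
have uQc : cmx Qh \in unitmx by rewrite cmx_unit.
have uBc : cmx Bw \in unitmx by rewrite cmx_unit.
have q0 : 0 < q.
  apply: vnorm_gt0; apply: contra x0 => /eqP H.
  by apply/eqP; rewrite -(mulKmx uQc x) H mulmx0.
pose y K' := (l%:M - cmx (A + B *m K')) *m x.
pose v K' := invmx (cmx Bw) *m y K'.
have vc : mxlim (nbhs K) v 0.
  have : mxlim (nbhs K) v (invmx (cmx Bw) *m ((l%:M - M) *m x)).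
    apply: mxlim_mul; first exact: mxlim_cst.
    apply: mxlim_mul; last exact: mxlim_cst.
    apply: mxlim_sub; [exact: mxlim_cst | exact: mxlim_MKc].
  by rewrite Nx mulmx0.
have vn : vnorm (v x) @[x --> nbhs K] --> 0.
  by rewrite -(vnorm0 R n); apply: vnorm_cvg.
have e0 : 0 < q / beta by rewrite divr_gt0.
have [K' [KbK' HK']] := closure_near cl (@cvgr_lt _ _ _ _ _ _ vn _ e0).
have [hK' _] := KbK'.
have uN : (l%:M - cmx (A + B *m K')) \in unitmx by apply: hurwitz_unit hK' _; rewrite l0.
have v0 : v K' != 0.
  apply: contra x0 => /eqP H.
  have yK : y K' = 0 by rewrite -(mulKVmx uBc (y K')) -/(v K') H mulmx0.
  by apply/eqP; rewrite -(mulKmx uN x) -/(y K') yK mulmx0.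
have vp := @vnorm_gt0 R _ _ v0.
pose u := (vnorm (v K'))^-1%:C *: v K'.
have u1 : vnorm u = 1.
  rewrite vnormZ ger0_norm ?invr_ge0 ?vnorm_ge0 // mulVf //; exact: lt0r_neq0.
have := Kb_bound w KbK' u1.
have -> : Tinf A B Bw Qh Rh K' w *m u =
    (vnorm (v K'))^-1%:C *: (cmx (col_mx Qh (Rh *m K')) *m x).
  rewrite /u -scalemxAr; congr (_ *: _).
  by rewrite /Tinf -lw /v /y -!mulmxA (mulKVmx uBc) mulKmx.
rewrite vnormZ ger0_norm ?invr_ge0 ?vnorm_ge0 // cmx_col_mul.
have H1 := @vnorm_col_ge R _ _ (cmx Qh *m x) (cmx (Rh *m K') *m x).
rewrite -/q in H1.
move=> H2.
have H3 : (vnorm (v K'))^-1 * q < beta.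
  apply: le_lt_trans H2; rewrite ler_pM2l // invr_gt0 //.
move: HK'; rewrite ltr_pdivlMr // => H4.
move: H3; rewrite -(ltr_pM2l vp) mulrA mulfV ?gt_eqF // mul1r.
by move=> H5; have := lt_trans H4 H5; rewrite ltxx.
Qed.
Lemma mxlimR_col p1 p2 q (f : 'M[R]_(m, n) -> 'M[R]_(p1, q)) (g : 'M[R]_(m, n) -> 'M[R]_(p2, q)) a b (K : 'M[R]_(m, n)) :
  mxlim (nbhs K) f a -> mxlim (nbhs K) g b ->
  mxlim (nbhs K) (fun x => col_mx (f x) (g x)) (col_mx a b).
Proof.
move=> fa gb i j; rewrite mxE; under eq_fun do rewrite mxE.
by case: (fintype.split i) => k; [exact: fa | exact: gb].
Qed.
Lemma partB K : closure Kb K -> Kstab A B K ->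
  (hinf_norm A B Bw Qh Rh K <= beta%:E)%E.
Proof.
move=> cl hK; apply: ge_ereal_sup => _ [w _ <-].
apply: ge_ereal_sup => _ [v v1 <-].
rewrite lee_fin leNgt; apply/negP => Hgt.
pose N K' := (Complex 0 w)%:M - cmx (A + B *m K').
have uN : N K \in unitmx by apply: hurwitz_unit hK _; rewrite /= lexx.
pose G K' := cmx (col_mx Qh (Rh *m K')) *m ((\det (N K'))^-1 *: \adj (N K')) *m cmx Bw *m v.
have Gc : mxlim (nbhs K) G (Tinf A B Bw Qh Rh K w *m v).
  rewrite /Tinf; apply: mxlim_mul; last exact: mxlim_cst.
  apply: mxlim_mul; last exact: mxlim_cst.
  apply: mxlim_mul.
    apply: mxlim_cmx; apply: mxlimR_col; first exact: mxlim_cst.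
    apply: mxlim_mul; [exact: mxlim_cst | exact: id_mxlim].
  apply: mxlim_inv uN _; apply: mxlim_sub; [exact: mxlim_cst | exact: mxlim_MKc].
have Gn : vnorm (G x) @[x --> nbhs K] --> vnorm (Tinf A B Bw Qh Rh K w *m v) by apply: vnorm_cvg.
have [K' [KbK' HK']] := closure_near cl (@cvgr_gt _ _ _ _ _ _ Gn _ Hgt).
have [hK' _] := KbK'.
have uN' : N K' \in unitmx by apply: hurwitz_unit hK' _; rewrite /= lexx.
have GE : G K' = Tinf A B Bw Qh Rh K' w *m v by rewrite /G /Tinf /invmx uN'.
have := Kb_bound w KbK' v1; rewrite -GE => H.
by have := lt_trans H HK'; rewrite ltxx.
Qed.
End Main.
End Tk4.
Import Tk4.

Unset Implicit Arguments.
Set Strict Implicit.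

Theorem corollary1 (R : realType) (n m : nat)
  (A : 'M[R]_n) (B : 'M[R]_(n, m)) (Bw : 'M[R]_n)
  (Q2 Q2h Qinf Qinfh : 'M[R]_n) (R2 Rinf Rinfh : 'M[R]_m)
  (beta : R) :
  (* weights and their square roots *)
  psd Q2 -> is_sqrtm Q2h Q2 -> pd R2 ->
  pd Qinf -> is_sqrtm Qinfh Qinf -> pd Rinf -> is_sqrtm Rinfh Rinf ->
  0 < beta ->
  (* Assumption 1 *)
  stabilizable A B -> detectable Q2h A ->
  (beta_star A B Bw Qinfh Rinfh < beta%:E)%E ->
  (* Assumption 2 *)
  pd (Bw *m Bw^T) ->
  closure (Kbeta A B Bw Qinfh Rinfh beta) `\` Kbeta A B Bw Qinfh Rinfh beta
  `<=` [set K | Kstab A B K /\ hinf_norm A B Bw Qinfh Rinfh K = beta%:E].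
Proof.
move=> _ _ _ pdQ sqQ _ _ b0 _ _ _ pdB K [cl nK].
have uQ := @pd_sqrt_unit R _ _ _ pdQ sqQ.
have uB := @pd_BBt_unit R _ _ pdB.
have hK : Kstab A B K.
  move=> l eK; rewrite ltNge; apply/negP => l0.
  move: l0; rewrite le_eqVlt => /orP [/eqP l0 | l0].
    exact: (partA2 uQ uB b0 cl eK (esym l0)).
  exact: (partA1 cl eK l0).
split => //; apply/eqP; rewrite eq_le partB //= leNgt; apply/negP => hlt.
by apply: nK; split.
Qed.
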